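(* Under the standing assumptions below, the closure $\overline{\mathcal P_1}$ is a perfect set; consequently $\overline{\mathcal P_1}$ is uncountable and $\overline{\mathcal P_1}\setminus\mathcal P_1$ is uncountable.
   Context: Fix $\rho_1,\rho_2,\rho_3\in(0,1)$ with $\rho_1+\rho_2+\rho_3>1$ and $\rho_i+\rho_j\le1$ for all $i\ne j$; $\mu_i=1$, $\theta:=\rho_1+\rho_2+\rho_3-1$. $A_i^0:=\{y\in\mathbb R^3: y_1+y_2+y_3=1, y_i=0, y_l\ge0\}$, $A^0:=\bigcup_iA_i^0$; for $z\in A^0\setminus A_j^0$, $f_j(z):=\sum_{i\neq j}\frac{(1-\rho_j)z_i+\rho_i z_j}{(1-\rho_j)+\theta z_j}e_i$. For $(\hat i,\hat j,\hat k)$ equal to $(1,2,3)$ or a cyclic permutation, $(1-x)e_{\hat j}+xe_{\hat k}\in A^0_{\hat i}$ is written $(x,\hat i)$. Decision points $d_1,d_2,d_3\in(0,1)$ (identified with $(d_{\hat i},\hat i)$); switching rule $\mathfrak R((x,\hat i))=\hat j$ if $x<d_{\hat i}$, $\hat k$ if $x>d_{\hat i}$, both allowed if $x=d_{\hat i}$; $\varphi(z):=f_{\mathfrak R(z)}(z)$. A trajectory is $(z(t))$ with $z(t+1)\in\varphi(z(t))$; $z$ is a pre-image of $z'$ if some trajectory from $z$ has $z(t)=z'$ for some $t\ge1$. Standing assumption: $d_1$ has infinitely many distinct pre-images, while $d_2$ and $d_3$ have only finitely many. $\mathcal P_1$ is the set consisting of $d_1$ and all its pre-images; closure is with respect to the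 Euclidean topology on $A^0$. *)

(* Defs.v *)
From Stdlib Require Import Reals Lra.
Open Scope R_scope.

Inductive idx := i1 | i2 | i3.

Definition idx_eqb (a b : idx) : bool :=
  match a, b with
  | i1, i1 | i2, i2 | i3, i3 => true
  | _, _ => false
  end.

Definition nxt (i : idx) : idx :=
  match i with i1 => i2 | i2 => i3 | i3 => i1 end.

Definition pt := idx -> R.

Definition theta (rho : idx -> R) : R := rho i1 + rho i2 + rho i3 - 1.

Definition inA0i (i : idx) (y : pt) : Prop :=
  y i1 + y i2 + y i3 = 1 /\ y i = 0 /\ 0 <= y i1 /\ 0 <= y i2 /\ 0 <= y i3.
Definition inA0 (y : pt) : Prop := exists i, inA0i i y.

Definition f (rho : idx -> R) (j : idx) (z : pt) : pt :=
  fun i => if idx_eqb i j then 0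
           else ((1 - rho j) * z i + rho i * z j) / ((1 - rho j) + theta rho * z j).

(* (x, ihat) := (1-x) e_jhat + x e_khat, with (ihat,jhat,khat) cyclic *)
Definition xpt (x : R) (ih : idx) : pt :=
  fun l => if idx_eqb l (nxt ih) then 1 - x
           else if idx_eqb l (nxt (nxt ih)) then x else 0.

(* z' in phi(z) = f_{R(z)}(z), the switching rule R given by decision points d *)
Definition step (rho d : idx -> R) (z z' : pt) : Prop :=
  exists (ih : idx) (x : R), 0 <= x <= 1 /\ z = xpt x ih /\
    ((x <= d ih /\ z' = f rho (nxt ih) z) \/
     (d ih <= x /\ z' = f rho (nxt (nxt ih)) z)).

Definition trajectory (rho d : idx -> R) (zs : nat -> pt) : Prop :=
  forall t, step rho d (zs t) (zs (S t)).

Definition preimage (rho d : idx -> R) (z z' : pt) : Prop :=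
  exists zs : nat -> pt, trajectory rho d zs /\ zs O = z /\
    exists t : nat, (1 <= t)%nat /\ zs t = z'.

Definition dpt (d : idx -> R) (i : idx) : pt := xpt (d i) i.

Definition P1 (rho d : idx -> R) (z : pt) : Prop :=
  z = dpt d i1 \/ preimage rho d z (dpt d i1).

Definition finite_set (S : pt -> Prop) : Prop :=
  exists l : list pt, forall z, S z -> List.In z l.
Definition infinite_set (S : pt -> Prop) : Prop := ~ finite_set S.

Definition countable_set (S : pt -> Prop) : Prop :=
  exists g : pt -> nat, forall x y, S x -> S y -> g x = g y -> x = y.
Definition uncountable_set (S : pt -> Prop) : Prop := ~ countable_set S.

Definition dist3 (y z : pt) : R :=
  sqrt ((y i1 - z i1)^2 + (y i2 - z i2)^2 + (y i3 - z i3)^2).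

Definition adherent (S : pt -> Prop) (z : pt) : Prop :=
  forall eps, 0 < eps -> exists p, S p /\ dist3 z p < eps.

Definition closureA0 (S : pt -> Prop) (z : pt) : Prop :=
  inA0 z /\ adherent S z.

Definition closedA0 (S : pt -> Prop) : Prop :=
  forall z, inA0 z -> adherent S z -> S z.

Definition perfectA0 (S : pt -> Prop) : Prop :=
  closedA0 S /\
  forall z, S z -> forall eps, 0 < eps -> exists p, S p /\ p <> z /\ dist3 z p < eps.

(* Main.v *)
From Stdlib Require Import Reals Lra List ClassicalEpsilon FunctionalExtensionality Ranalysis5 Lia Classical ZArith.
Require Import Defs.
Open Scope R_scope.

Lemma sq_nonneg' a : 0 <= a * a.
Proof. pose proof (Rle_0_sqr a); unfold Rsqr in *; lra. Qed.

Lemma dist3_nonneg y z : 0 <= dist3 y z.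
Proof. apply sqrt_pos. Qed.

Lemma dist3_sym y z : dist3 y z = dist3 z y.
Proof. unfold dist3. f_equal. ring. Qed.

Lemma dist3_refl z : dist3 z z = 0.
Proof. unfold dist3. replace ((z i1 - z i1) ^ 2 + (z i2 - z i2) ^ 2 + (z i3 - z i3) ^ 2) with 0 by ring.
  apply sqrt_0. Qed.

Lemma coord_le_dist y z i : Rabs (y i - z i) <= dist3 y z.
Proof.
  unfold dist3. rewrite <- sqrt_Rsqr_abs. apply sqrt_le_1_alt. unfold Rsqr.
  pose proof (sq_nonneg' (y i1 - z i1)). pose proof (sq_nonneg' (y i2 - z i2)).
  pose proof (sq_nonneg' (y i3 - z i3)). destruct i; simpl; lra.
Qed.

Lemma dist3_eq0 y z : dist3 y z = 0 -> y = z.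
Proof.
  intro H. apply functional_extensionality; intro i. pose proof (coord_le_dist y z i).
  rewrite H in H0. pose proof (Rabs_pos (y i - z i)). assert (Rabs (y i - z i) = 0) by lra.
  destruct (Req_dec (y i - z i) 0). lra. exfalso. pose proof (Rabs_no_R0 _ H3). lra.
Qed.

Lemma dist3_pos y z : y <> z -> 0 < dist3 y z.
Proof. intro H. destruct (dist3_nonneg y z); auto. exfalso; apply H, dist3_eq0; auto. Qed.

Lemma dist3_coord_bound y z r : (forall i, Rabs (y i - z i) <= r) -> dist3 y z <= 2 * r.
Proof.
  intros H. pose proof (H i1). pose proof (H i2). pose proof (H i3).
  assert (0 <= r) by (pose proof (Rabs_pos (y i1 - z i1)); lra).
  unfold dist3. rewrite <- (sqrt_square (2 * r)) by lra. apply sqrt_le_1_alt.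
  assert (forall a, Rabs a <= r -> a ^ 2 <= r * r).
  { intros a Ha. unfold Rabs in Ha. destruct (Rcase_abs a); simpl; nra. }
  pose proof (H4 _ H0). pose proof (H4 _ H1). pose proof (H4 _ H2). nra.
Qed.

Lemma cs3 a1 a2 a3 b1 b2 b3 :
  a1*b1 + a2*b2 + a3*b3 <= sqrt (a1*a1 + a2*a2 + a3*a3) * sqrt (b1*b1 + b2*b2 + b3*b3).
Proof.
  set (A := a1*a1 + a2*a2 + a3*a3). set (B := b1*b1 + b2*b2 + b3*b3).
  assert (0 <= A) by (unfold A; pose proof (sq_nonneg' a1); pose proof (sq_nonneg' a2); pose proof (sq_nonneg' a3); lra).
  assert (0 <= B) by (unfold B; pose proof (sq_nonneg' b1); pose proof (sq_nonneg' b2); pose proof (sq_nonneg' b3); lra).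
  set (s := a1*b1 + a2*b2 + a3*b3).
  destruct (Rle_dec s 0). pose proof (sqrt_pos A); pose proof (sqrt_pos B); nra.
  rewrite <- sqrt_mult by auto. rewrite <- (sqrt_square s) by lra. apply sqrt_le_1_alt.
  unfold s, A, B.
  pose proof (sq_nonneg' (a1*b2 - a2*b1)). pose proof (sq_nonneg' (a1*b3 - a3*b1)).
  pose proof (sq_nonneg' (a2*b3 - a3*b2)). nra.
Qed.

Lemma dist3_tri x y z : dist3 x z <= dist3 x y + dist3 y z.
Proof.
  unfold dist3.
  set (a1 := x i1 - y i1). set (a2 := x i2 - y i2). set (a3 := x i3 - y i3).
  set (b1 := y i1 - z i1). set (b2 := y i2 - z i2). set (b3 := y i3 - z i3).
  replace (x i1 - z i1) with (a1 + b1) by (unfold a1, b1; ring).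
  replace (x i2 - z i2) with (a2 + b2) by (unfold a2, b2; ring).
  replace (x i3 - z i3) with (a3 + b3) by (unfold a3, b3; ring).
  pose proof (cs3 a1 a2 a3 b1 b2 b3).
  replace (a1^2 + a2^2 + a3^2) with (a1*a1 + a2*a2 + a3*a3) by ring.
  replace (b1^2 + b2^2 + b3^2) with (b1*b1 + b2*b2 + b3*b3) by ring.
  set (A := a1*a1 + a2*a2 + a3*a3) in *. set (B := b1*b1 + b2*b2 + b3*b3) in *.
  assert (0 <= A) by (unfold A; pose proof (sq_nonneg' a1); pose proof (sq_nonneg' a2); pose proof (sq_nonneg' a3); lra).
  assert (0 <= B) by (unfold B; pose proof (sq_nonneg' b1); pose proof (sq_nonneg' b2); pose proof (sq_nonneg' b3); lra).
  rewrite <- (sqrt_square (sqrt A + sqrt B)) by (pose proof (sqrt_pos A); pose proof (sqrt_pos B); lra).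
  apply sqrt_le_1_alt.
  replace ((sqrt A + sqrt B) * (sqrt A + sqrt B)) with (sqrt A * sqrt A + sqrt B * sqrt B + 2 * (sqrt A * sqrt B)) by ring.
  rewrite !sqrt_sqrt by auto. unfold A, B in *. nra.
Qed.

Lemma abs_le a r : Rabs a <= r -> - r <= a <= r.
Proof. unfold Rabs. destruct (Rcase_abs a); lra. Qed.

Lemma le_eps a b : (forall eps, 0 < eps -> a < b + eps) -> a <= b.
Proof. intros H. destruct (Rle_dec a b); auto. specialize (H ((a - b)/2) ltac:(lra)). lra. Qed.

Lemma inv_small eps : 0 < eps -> exists M : nat, / (INR M + 1) < eps.
Proof.
  intros He. destruct (archimed (/ eps)) as [H1 H2].
  assert (0 < / eps) by (apply Rinv_0_lt_compat; lra).
  exists (Z.to_nat (up (/ eps))).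
  assert (0 <= up (/ eps))%Z by (apply le_IZR; lra).
  rewrite INR_IZR_INZ, Z2Nat.id by auto.
  set (X := IZR (up (/ eps))) in *.
  assert (eps * / eps = 1) by (field; lra).
  apply (Rmult_lt_reg_r (X + 1)). lra. rewrite Rinv_l by lra. nra.
Qed.

Section Baire.
Variable SS : pt -> Prop.
Hypothesis Hcl : closedA0 SS.
Hypothesis HA : forall z, SS z -> inA0 z.
Hypothesis Hperf : forall z, SS z -> forall eps, 0 < eps -> exists p, SS p /\ p <> z /\ dist3 z p < eps.
Variable g : pt -> nat.
Hypothesis Hg : forall x y, SS x -> SS y -> g x = g y -> x = y.

Lemma baire_step n c r : SS c -> 0 < r -> exists c' r', SS c' /\ 0 < r' /\ r' <= r / 4 /\
  r' <= / (INR n + 1) /\ dist3 c c' <= r / 4 /\ forall z, SS z -> dist3 c' z <= r' -> g z <> n.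
Proof.
  intros Hc Hr. assert (Hn : 0 < / (INR n + 1)) by (apply Rinv_0_lt_compat; pose proof (pos_INR n); lra).
  set (r0 := Rmin (r/4) (/ (INR n + 1))).
  assert (0 < r0) by (apply Rmin_glb_lt; lra).
  assert (r0 <= r/4) by apply Rmin_l. assert (r0 <= / (INR n + 1)) by apply Rmin_r.
  destruct (classic (exists e, SS e /\ g e = n)) as [(e & He & Ee)|Hne].
  - assert (exists c', SS c' /\ c' <> e /\ dist3 c c' <= r / 4) as (c' & Hc' & Hce & Hd).
    { destruct (classic (c = e)) as [<-|Hce].
      - destruct (Hperf c Hc (r/4) ltac:(lra)) as (p & Hp & Hpc & Hd). exists p; split; auto; split; auto; lra.
      - exists c. split; auto. split; auto. rewrite dist3_refl; lra. }
    pose proof (dist3_pos _ _ Hce).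
    exists c', (Rmin r0 (dist3 c' e / 2)). split; auto.
    assert (Rmin r0 (dist3 c' e / 2) <= r0) by apply Rmin_l.
    assert (Rmin r0 (dist3 c' e / 2) <= dist3 c' e / 2) by apply Rmin_r.
    split. apply Rmin_glb_lt; lra. split. lra. split. lra. split; auto.
    intros z Hz Hdz Egz. rewrite <- Ee in Egz. apply Hg in Egz; auto. subst. lra.
  - exists c, r0. split; auto. split; auto. split; auto. split; auto. split. rewrite dist3_refl; lra.
    intros z Hz _ E. apply Hne; eauto.
Qed.

Definition BT := { p : pt * R | SS (fst p) /\ 0 < snd p }.

Definition bnext (n : nat) (p : BT) : BT.
Proof.
  destruct p as [[c r] [Hc Hr]]. simpl in *.
  destruct (constructive_indefinite_description _ (baire_step n c r Hc Hr)) as [c' H].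
  destruct (constructive_indefinite_description _ H) as [r' H'].
  exists (c', r'). simpl. tauto.
Defined.

Lemma bnext_spec n p : let c := fst (proj1_sig p) in let r := snd (proj1_sig p) in
  let c' := fst (proj1_sig (bnext n p)) in let r' := snd (proj1_sig (bnext n p)) in
  r' <= r / 4 /\ r' <= / (INR n + 1) /\ dist3 c c' <= r / 4 /\
  forall z, SS z -> dist3 c' z <= r' -> g z <> n.
Proof.
  destruct p as [[c r] [Hc Hr]]. simpl. unfold bnext.
  destruct (constructive_indefinite_description _ (baire_step n c r Hc Hr)) as [c' H].
  destruct (constructive_indefinite_description _ H) as [r' H']. simpl. tauto.
Qed.

Variable start : BT.
Fixpoint bseq (n : nat) : BT := match n with O => start | S m => bnext m (bseq m) end.
Definition cc n := fst (proj1_sig (bseq n)).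
Definition rr n := snd (proj1_sig (bseq n)).

Lemma cc_S n : SS (cc n). Proof. unfold cc. destruct (bseq n) as [p Hp]. simpl. tauto. Qed.
Lemma rr_pos n : 0 < rr n. Proof. unfold rr. destruct (bseq n) as [p Hp]. simpl. tauto. Qed.

Lemma bstep n : rr (S n) <= rr n / 4 /\ rr (S n) <= / (INR n + 1) /\ dist3 (cc n) (cc (S n)) <= rr n / 4 /\
  forall z, SS z -> dist3 (cc (S n)) z <= rr (S n) -> g z <> n.
Proof. unfold rr, cc. simpl. apply bnext_spec. Qed.

Lemma bnest n k : dist3 (cc n) (cc (n + k)%nat) + rr (n + k)%nat / 3 <= rr n / 3.
Proof.
  induction k. rewrite Nat.add_0_r, dist3_refl. lra.
  rewrite <- plus_n_Sm. destruct (bstep (n + k)) as (H1 & _ & H3 & _).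
  pose proof (dist3_tri (cc n) (cc (n + k)) (cc (S (n + k)))). lra.
Qed.

Lemma rr_small eps : 0 < eps -> exists N, forall n, (N <= n)%nat -> rr n < eps.
Proof.
  intros He. destruct (inv_small eps He) as [M HM]. exists (S M). intros n Hn.
  destruct (bstep M) as (_ & H2 & _ & _).
  pose proof (bnest (S M) (n - S M)). replace (S M + (n - S M))%nat with n in H by lia.
  pose proof (dist3_nonneg (cc (S M)) (cc n)). lra.
Qed.

Lemma cc_close n m : (n <= m)%nat -> dist3 (cc n) (cc m) <= rr n / 3.
Proof.
  intros H. pose proof (bnest n (m - n)). replace (n + (m - n))%nat with m in H0 by lia.
  pose proof (rr_pos m). lra.
Qed.

Lemma cc_cauchy i : Cauchy_crit (fun n => cc n i).
Proof.
  intros eps He. destruct (rr_small eps He) as [N HN]. exists N. intros n m Hn Hm.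
  unfold R_dist. pose proof (coord_le_dist (cc n) (cc m) i).
  pose proof (cc_close N n Hn). pose proof (cc_close N m Hm).
  pose proof (dist3_tri (cc n) (cc N) (cc m)). rewrite (dist3_sym (cc n) (cc N)) in H2. cbv beta. pose proof (rr_pos N).
  specialize (HN N (le_n N)). lra.
Qed.

Definition Lim : pt := fun i => proj1_sig (R_complete _ (cc_cauchy i)).

Lemma Lim_close n i : Rabs (Lim i - cc n i) <= rr n / 3.
Proof.
  unfold Lim. destruct (R_complete _ (cc_cauchy i)) as [l Hl]. simpl.
  apply le_eps. intros eps He. destruct (Hl eps He) as [N HN].
  specialize (HN (Nat.max N n) ltac:(lia)). unfold R_dist in HN.
  pose proof (coord_le_dist (cc (Nat.max N n)) (cc n) i). rewrite dist3_sym in H.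
  pose proof (cc_close n (Nat.max N n) ltac:(lia)).
  pose proof (Rabs_triang (l - cc (Nat.max N n) i) (cc (Nat.max N n) i - cc n i)).
  replace (l - cc (Nat.max N n) i + (cc (Nat.max N n) i - cc n i)) with (l - cc n i) in H1 by ring.
  rewrite Rabs_minus_sym in HN. lra.
Qed.

Lemma Lim_dist n : dist3 (cc n) Lim <= 2 * (rr n / 3).
Proof. apply dist3_coord_bound. intro i. rewrite Rabs_minus_sym. apply Lim_close. Qed.

Lemma Lim_S : SS Lim.
Proof.
  apply Hcl.
  - assert (Hnn : forall i, 0 <= Lim i).
    { intro i. apply le_eps. intros eps He. destruct (rr_small eps He) as [N HN].
      specialize (HN N (le_n N)). pose proof (Lim_close N i). destruct (HA _ (cc_S N)) as [j Hj].
      unfold inA0i in Hj. assert (0 <= cc N i) by (destruct i; lra).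
      pose proof (abs_le _ _ H). pose proof (rr_pos N). unfold Rabs in H. destruct (Rcase_abs (Lim i - cc N i)); lra. }
    assert (Hsum : Lim i1 + Lim i2 + Lim i3 = 1).
    { apply Rle_antisym; apply le_eps; intros eps He; destruct (rr_small eps He) as [N HN];
      specialize (HN N (le_n N)); pose proof (Lim_close N i1); pose proof (Lim_close N i2);
      pose proof (Lim_close N i3); destruct (HA _ (cc_S N)) as [j Hj]; unfold inA0i in Hj;
      apply abs_le in H; apply abs_le in H0; apply abs_le in H1; lra. }
    assert (Hz : exists j, Lim j = 0).
    { apply NNPP. intro Hn.
      assert (forall j, 0 < Lim j) by (intro j; destruct (Hnn j); auto; exfalso; apply Hn; eauto).
      set (m := Rmin (Lim i1) (Rmin (Lim i2) (Lim i3))).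
      assert (0 < m) by (apply Rmin_glb_lt; [|apply Rmin_glb_lt]; auto).
      destruct (rr_small m H0) as [N HN]. specialize (HN N (le_n N)).
      destruct (HA _ (cc_S N)) as [j Hj]. unfold inA0i in Hj. pose proof (Lim_close N j).
      apply abs_le in H1. pose proof (rr_pos N).
      assert (m <= Lim j).
      { unfold m. destruct j. apply Rmin_l. eapply Rle_trans; [apply Rmin_r|apply Rmin_l].
        eapply Rle_trans; [apply Rmin_r|apply Rmin_r]. }
      destruct Hj as (_ & Hj & _). lra. }
    destruct Hz as [j Hj]. exists j. unfold inA0i. pose proof (Hnn i1). pose proof (Hnn i2). pose proof (Hnn i3).
    auto.
  - intros eps He. destruct (rr_small eps He) as [N HN]. specialize (HN N (le_n N)).
    exists (cc N). split. apply cc_S. rewrite dist3_sym. pose proof (Lim_dist N). pose proof (rr_pos N). lra.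
Qed.

Lemma baire_contra : False.
Proof.
  destruct (bstep (g Lim)) as (_ & _ & _ & H). apply (H Lim Lim_S); auto.
  pose proof (Lim_dist (S (g Lim))). pose proof (rr_pos (S (g Lim))). lra.
Qed.

End Baire.

Lemma baire (SS : pt -> Prop) : closedA0 SS -> (forall z, SS z -> inA0 z) ->
  (forall z, SS z -> forall eps, 0 < eps -> exists p, SS p /\ p <> z /\ dist3 z p < eps) ->
  (exists z, SS z) -> uncountable_set SS.
Proof.
  intros Hcl HA Hperf [z0 Hz0] [g Hg].
  assert (Hs : SS (fst (z0, 1)) /\ 0 < snd (z0, 1)) by (simpl; split; auto; lra).
  exact (baire_contra SS Hcl HA Hperf g Hg (exist _ (z0, 1) Hs)).
Qed.

Lemma nxt3 i : nxt (nxt (nxt i)) = i. Proof. destruct i; reflexivity. Qed.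
Lemma nxt_inj i j : nxt i = nxt j -> i = j.
Proof. destruct i, j; simpl; congruence. Qed.

Section S.
Variable rho : idx -> R.
Hypothesis Hrho : forall i, 0 < rho i < 1.
Hypothesis Hsum : rho i1 + rho i2 + rho i3 > 1.
Hypothesis H12 : rho i1 + rho i2 <= 1.
Hypothesis H23 : rho i2 + rho i3 <= 1.
Hypothesis H13 : rho i1 + rho i3 <= 1.

Lemma pair_le i : rho i + rho (nxt i) <= 1.
Proof. destruct i; simpl; lra. Qed.
Lemma pair_le' i : rho i + rho (nxt (nxt i)) <= 1.
Proof. destruct i; simpl; lra. Qed.
Lemma theta_eq i : theta rho = rho i + rho (nxt i) + rho (nxt (nxt i)) - 1.
Proof. unfold theta; destruct i; simpl; lra. Qed.
Lemma theta_pos : 0 < theta rho.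
Proof. unfold theta; lra. Qed.

Definition gL i x := rho i * (1-x) / (1 - rho (nxt i) + theta rho * (1-x)).
Definition gR i x := ((1 - rho (nxt (nxt i)))*(1-x) + rho (nxt i) * x)
                      / (1 - rho (nxt (nxt i)) + theta rho * x).

Lemma fL i x : x <= 1 -> f rho (nxt i) (xpt x i) = xpt (gL i x) (nxt i).
Proof.
  intros Hx. pose proof theta_pos. pose proof (theta_eq i).
  pose proof (Hrho i). pose proof (Hrho (nxt i)). pose proof (Hrho (nxt (nxt i))).
  assert (0 < 1 - rho (nxt i) + theta rho * (1-x)) by nra.
  apply functional_extensionality; intro l. unfold f, xpt, gL.
  destruct i, l; simpl in *; unfold theta in *; try field; lra.
Qed.

Lemma fR i x : 0 <= x -> f rho (nxt (nxt i)) (xpt x i) = xpt (gR i x) (nxt (nxt i)).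
Proof.
  intros Hx. pose proof theta_pos. pose proof (theta_eq i).
  pose proof (Hrho i). pose proof (Hrho (nxt i)). pose proof (Hrho (nxt (nxt i))).
  assert (0 < 1 - rho (nxt (nxt i)) + theta rho * x) by nra.
  apply functional_extensionality; intro l. unfold f, xpt, gR.
  destruct i, l; simpl in *; unfold theta in *; try field; lra.
Qed.

Lemma DL_pos i x : x <= 1 -> 1 - rho (nxt i) <= 1 - rho (nxt i) + theta rho * (1-x).
Proof. intros. pose proof theta_pos. nra. Qed.
Lemma DR_pos i x : 0 <= x -> 1 - rho (nxt (nxt i)) <= 1 - rho (nxt (nxt i)) + theta rho * x.
Proof. intros. pose proof theta_pos. nra. Qed.

Lemma gL_diff i x y : x <= 1 -> y <= 1 ->
  gL i x - gL i y = rho i * (1 - rho (nxt i)) * (y - x) /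
     ((1 - rho (nxt i) + theta rho * (1-x)) * (1 - rho (nxt i) + theta rho * (1-y))).
Proof.
  intros. pose proof (DL_pos i x H). pose proof (DL_pos i y H0). pose proof (Hrho (nxt i)).
  unfold gL. field. split; lra.
Qed.

Lemma gR_diff i x y : 0 <= x -> 0 <= y ->
  gR i x - gR i y = rho i * (1 - rho (nxt (nxt i))) * (y - x) /
     ((1 - rho (nxt (nxt i)) + theta rho * x) * (1 - rho (nxt (nxt i)) + theta rho * y)).
Proof.
  intros. pose proof (DR_pos i x H). pose proof (DR_pos i y H0). pose proof (Hrho (nxt (nxt i))).
  pose proof (theta_eq i).
  unfold gR. rewrite H4. field. rewrite <- H4. split; lra.
Qed.

Lemma frac_bound (A B C h : R) : 0 < A -> 0 <= h -> A <= B -> A <= C -> 0 < A ->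
  forall r, 0 < r -> r <= A -> 0 <= r * A * h / (B * C) <= h.
Proof.
  intros. assert (0 < B * C) by nra. split.
  - apply Rmult_le_pos; [apply Rmult_le_pos; [apply Rmult_le_pos|]; lra| left; apply Rinv_0_lt_compat; lra].
  - apply (Rmult_le_reg_r (B*C)); auto. unfold Rdiv. rewrite Rmult_assoc, Rinv_l by lra.
    assert (A*A <= B*C) by nra. assert (r*A <= B*C) by nra.
    assert (0 <= (B*C - r*A)*h) by (apply Rmult_le_pos; lra). nra.
Qed.

Lemma gL_lip_ord i x y : x <= y -> y <= 1 -> 0 <= gL i x - gL i y <= y - x.
Proof.
  intros. rewrite gL_diff by lra. pose proof (Hrho (nxt i)). pose proof (Hrho i).
  pose proof (pair_le i).
  replace (rho i * (1 - rho (nxt i)) * (y - x)) with (rho i * (1 - rho (nxt i)) * (y - x)) by ring.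
  apply frac_bound; try lra; try apply DL_pos; lra.
Qed.

Lemma gR_lip_ord i x y : 0 <= x -> x <= y -> 0 <= gR i x - gR i y <= y - x.
Proof.
  intros. rewrite gR_diff by lra. pose proof (Hrho (nxt (nxt i))). pose proof (Hrho i).
  pose proof (pair_le' i).
  apply frac_bound; try lra; try apply DR_pos; lra.
Qed.

Lemma gL_strict i x y : x < y -> y <= 1 -> gL i y < gL i x.
Proof.
  intros. cut (0 < gL i x - gL i y). lra. rewrite gL_diff by lra.
  pose proof (Hrho (nxt i)). pose proof (Hrho i).
  pose proof (DL_pos i x ltac:(lra)). pose proof (DL_pos i y ltac:(lra)).
  apply Rdiv_lt_0_compat; apply Rmult_lt_0_compat; try apply Rmult_lt_0_compat; lra.
Qed.

Lemma gR_strict i x y : 0 <= x -> x < y -> gR i y < gR i x.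
Proof.
  intros. cut (0 < gR i x - gR i y). lra. rewrite gR_diff by lra.
  pose proof (Hrho (nxt (nxt i))). pose proof (Hrho i).
  pose proof (DR_pos i x ltac:(lra)). pose proof (DR_pos i y ltac:(lra)).
  apply Rdiv_lt_0_compat; apply Rmult_lt_0_compat; try apply Rmult_lt_0_compat; lra.
Qed.

Lemma gL_lip i x y : x <= 1 -> y <= 1 -> Rabs (gL i x - gL i y) <= Rabs (x - y).
Proof.
  intros. destruct (Rle_dec x y).
  - pose proof (gL_lip_ord i x y r H0). rewrite Rabs_pos_eq by lra. rewrite Rabs_left1 by lra. lra.
  - pose proof (gL_lip_ord i y x ltac:(lra) H). rewrite Rabs_left1 by lra. rewrite Rabs_pos_eq by lra. lra.
Qed.

Lemma gR_lip i x y : 0 <= x -> 0 <= y -> Rabs (gR i x - gR i y) <= Rabs (x - y).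
Proof.
  intros. destruct (Rle_dec x y).
  - pose proof (gR_lip_ord i x y H r). rewrite Rabs_pos_eq by lra. rewrite Rabs_left1 by lra. lra.
  - pose proof (gR_lip_ord i y x H0 ltac:(lra)). rewrite Rabs_left1 by lra. rewrite Rabs_pos_eq by lra. lra.
Qed.

Lemma gL_cont i x : x <= 1 -> continuity_pt (gL i) x.
Proof.
  intros. pose proof (DL_pos i x H). pose proof (Hrho (nxt i)). unfold gL. reg. lra.
Qed.
Lemma gR_cont i x : 0 <= x -> continuity_pt (gR i) x.
Proof.
  intros. pose proof (DR_pos i x H). pose proof (Hrho (nxt (nxt i))). unfold gR. reg. lra.
Qed.

Definition cL i := rho i / (rho i + rho (nxt (nxt i))).

Lemma gL_0 i : gL i 0 = cL i.
Proof.
  unfold gL, cL. rewrite (theta_eq i). pose proof (Hrho i). pose proof (Hrho (nxt (nxt i))).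
  field. lra.
Qed.
Lemma gL_range i x : 0 <= x < 1 -> 0 < gL i x <= cL i.
Proof.
  intros. rewrite <- gL_0. split.
  - unfold gL. pose proof (DL_pos i x ltac:(lra)). pose proof (Hrho i). pose proof (Hrho (nxt i)).
    apply Rdiv_lt_0_compat; nra.
  - destruct (Req_dec x 0). subst; lra. left; apply gL_strict; lra.
Qed.
Lemma cL_lt1 i : cL i < 1.
Proof. unfold cL. pose proof (Hrho i). pose proof (Hrho (nxt (nxt i))).
  apply (Rmult_lt_reg_r (rho i + rho (nxt (nxt i)))); [lra|]. unfold Rdiv.
  rewrite Rmult_assoc, Rinv_l by lra. lra. Qed.
Lemma cL_pos i : 0 < cL i.
Proof. unfold cL. pose proof (Hrho i). pose proof (Hrho (nxt (nxt i))).
  apply Rdiv_lt_0_compat; lra. Qed.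

Lemma gR_1 i : gR i 1 = cL (nxt i).
Proof.
  unfold gR, cL. rewrite nxt3. rewrite (theta_eq i). pose proof (Hrho i). pose proof (Hrho (nxt i)).
  field. lra.
Qed.
Lemma gR_0 i : gR i 0 = 1.
Proof. unfold gR. pose proof (Hrho (nxt (nxt i))). field. lra. Qed.
Lemma gR_range i x : 0 < x <= 1 -> cL (nxt i) <= gR i x < 1.
Proof.
  intros. rewrite <- gR_1. pose proof (gR_0 i). split.
  - destruct (Req_dec x 1). subst; lra. left; apply gR_strict; lra.
  - pose proof (gR_strict i 0 x ltac:(lra) ltac:(lra)). lra.
Qed.

Lemma xpt_c0 x i : xpt x i i = 0.
Proof. destruct i; reflexivity. Qed.
Lemma xpt_c1 x i : xpt x i (nxt i) = 1 - x.
Proof. destruct i; reflexivity. Qed.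
Lemma xpt_c2 x i : xpt x i (nxt (nxt i)) = x.
Proof. destruct i; reflexivity. Qed.

Lemma xpt_same x x' i : xpt x i = xpt x' i -> x = x'.
Proof. intro H. rewrite <- (xpt_c2 x i), <- (xpt_c2 x' i), H. reflexivity. Qed.

Lemma xpt_inj x x' i i' : 0 < x < 1 -> 0 <= x' <= 1 -> xpt x i = xpt x' i' -> i = i' /\ x = x'.
Proof.
  intros Hx Hx' H.
  assert (i = i').
  { pose proof (f_equal (fun z => z i') H) as E. simpl in E. rewrite xpt_c0 in E.
    destruct i, i'; auto; unfold xpt in E; simpl in E; exfalso; lra. }
  subst. split; auto. eapply xpt_same; eauto.
Qed.

Lemma corner m : xpt 0 (nxt (nxt m)) = xpt 1 (nxt m).
Proof. apply functional_extensionality; intro l; destruct m, l; unfold xpt; simpl; lra. Qed.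

Lemma xpt_A0 x i : 0 <= x <= 1 -> inA0 (xpt x i).
Proof.
  intros. exists i. unfold inA0i. destruct i; unfold xpt; simpl; lra.
Qed.

Lemma dist3_xpt x x' i : dist3 (xpt x i) (xpt x' i) <= 2 * Rabs (x - x').
Proof.
  assert (E: dist3 (xpt x i) (xpt x' i) = sqrt (2 * ((x - x') * (x - x')))).
  { unfold dist3. f_equal. destruct i; unfold xpt; simpl; ring. }
  rewrite E. rewrite <- (sqrt_square (2 * Rabs (x - x'))).
  2: { pose proof (Rabs_pos (x - x')); lra. }
  apply sqrt_le_1_alt.
  assert (Rabs(x-x')*Rabs(x-x') = (x-x')*(x-x')) by (rewrite <- Rabs_mult; apply Rabs_pos_eq; pose proof (Rle_0_sqr (x-x')); unfold Rsqr in *; lra).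
  pose proof (Rabs_pos (x-x')). nra.
Qed.

Lemma corner' i : xpt 0 (nxt i) = xpt 1 i.
Proof. apply functional_extensionality; intro l; destruct i, l; unfold xpt; simpl; lra. Qed.

Variable d : idx -> R.
Hypothesis Hd : forall i, 0 < d i < 1.

Lemma step_iff z w : step rho d z w <-> exists i x, 0 <= x <= 1 /\ z = xpt x i /\
  ((x <= d i /\ w = xpt (gL i x) (nxt i)) \/ (d i <= x /\ w = xpt (gR i x) (nxt (nxt i)))).
Proof.
  split; intros (i & x & Hx & Hz & H); exists i, x; split; auto; split; auto;
  subst z; destruct H as [[H1 H2]|[H1 H2]].
  - left; split; auto. rewrite H2, fL; auto; lra.
  - right; split; auto. rewrite H2, fR; auto; lra.
  - left; split; auto. rewrite H2, fL; auto; lra.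
  - right; split; auto. rewrite H2, fR; auto; lra.
Qed.

Lemma gL_int i x : 0 <= x <= d i -> 0 < gL i x < 1.
Proof. intros. pose proof (Hd i). pose proof (gL_range i x ltac:(lra)). pose proof (cL_lt1 i). lra. Qed.
Lemma gR_int i x : d i <= x <= 1 -> 0 < gR i x < 1.
Proof. intros. pose proof (Hd i). pose proof (gR_range i x ltac:(lra)). pose proof (cL_pos (nxt i)). lra. Qed.

Lemma step_target z w : step rho d z w -> exists m v, 0 < v < 1 /\ w = xpt v m.
Proof.
  intro H. apply step_iff in H. destruct H as (i & x & Hx & Hz & [[H1 H2]|[H1 H2]]).
  - exists (nxt i), (gL i x). split; auto. apply gL_int; lra.
  - exists (nxt (nxt i)), (gR i x). split; auto. apply gR_int; lra.
Qed.

Lemma step_exists x i : 0 <= x <= 1 -> exists w, step rho d (xpt x i) w.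
Proof.
  intros. destruct (Rle_dec x (d i)).
  - exists (xpt (gL i x) (nxt i)). apply step_iff. exists i, x. auto.
  - exists (xpt (gR i x) (nxt (nxt i))). apply step_iff. exists i, x. split; auto. split; auto.
    right; split; auto; lra.
Qed.

Lemma step_src_uniq z z' w : step rho d z w -> step rho d z' w -> z = z'.
Proof.
  intros H H'. apply step_iff in H. apply step_iff in H'.
  destruct H as (i & x & Hx & Hz & HH). destruct H' as (i' & x' & Hx' & Hz' & HH').
  subst z z'. pose proof (Hd i). pose proof (Hd i').
  destruct HH as [[H1 H2]|[H1 H2]]; destruct HH' as [[H1' H2']|[H1' H2']]; rewrite H2 in H2'.
  - apply xpt_inj in H2'; [|apply gL_int; lra| pose proof (gL_int i' x'); lra].
    destruct H2' as [E1 E2]. apply nxt_inj in E1. subst i'.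
    destruct (Rtotal_order x x') as [h|[h|h]].
    + pose proof (gL_strict i x x' h ltac:(lra)); lra.
    + subst; reflexivity.
    + pose proof (gL_strict i x' x h ltac:(lra)); lra.
  - apply xpt_inj in H2'; [|apply gL_int; lra| pose proof (gR_int i' x'); lra].
    destruct H2' as [E1 E2]. assert (i = nxt i') by (apply nxt_inj; auto). subst i.
    pose proof (gL_range (nxt i') x ltac:(lra)). pose proof (gR_range i' x' ltac:(lra)).
    assert (x = 0).
    { destruct (Req_dec x 0); auto. pose proof (gL_strict (nxt i') 0 x ltac:(lra) ltac:(lra)) as Hs.
      rewrite gL_0 in Hs. lra. }
    assert (x' = 1).
    { destruct (Req_dec x' 1); auto. pose proof (gR_strict i' x' 1 ltac:(lra) ltac:(lra)) as Hs.
      rewrite gR_1 in Hs. lra. }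
    subst. apply corner'.
  - apply xpt_inj in H2'; [|apply gR_int; lra| pose proof (gL_int i' x'); lra].
    destruct H2' as [E1 E2]. assert (i' = nxt i) by (apply nxt_inj; auto). subst i'.
    pose proof (gL_range (nxt i) x' ltac:(lra)). pose proof (gR_range i x ltac:(lra)).
    assert (x' = 0).
    { destruct (Req_dec x' 0); auto. pose proof (gL_strict (nxt i) 0 x' ltac:(lra) ltac:(lra)) as Hs.
      rewrite gL_0 in Hs. lra. }
    assert (x = 1).
    { destruct (Req_dec x 1); auto. pose proof (gR_strict i x 1 ltac:(lra) ltac:(lra)) as Hs.
      rewrite gR_1 in Hs. lra. }
    subst. symmetry; apply corner'.
  - apply xpt_inj in H2'; [|apply gR_int; lra| pose proof (gR_int i' x'); lra].
    destruct H2' as [E1 E2]. apply nxt_inj, nxt_inj in E1. subst i'.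
    destruct (Rtotal_order x x') as [h|[h|h]].
    + pose proof (gR_strict i x x' ltac:(lra) h); lra.
    + subst; reflexivity.
    + pose proof (gR_strict i x' x ltac:(lra) h); lra.
Qed.

Definition d1pt := dpt d i1.
Definition nextp (z : pt) : pt := epsilon (inhabits z) (fun w => step rho d z w).
Lemma nextp_spec z : (exists w, step rho d z w) -> step rho d z (nextp z).
Proof. intro H. unfold nextp. apply (epsilon_spec (inhabits z) (fun w => step rho d z w) H). Qed.

Fixpoint itn (n : nat) (z : pt) : pt := match n with O => z | S n => nextp (itn n z) end.

Lemma ex_traj x i : 0 <= x <= 1 -> exists zs, trajectory rho d zs /\ zs O = xpt x i.
Proof.
  intros Hx. exists (fun n => itn n (xpt x i)). split; auto.
  assert (Hf : forall n, exists i' x', 0 <= x' <= 1 /\ itn n (xpt x i) = xpt x' i').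
  { induction n. exists i, x; auto. destruct IHn as (i' & x' & Hx' & E). simpl. rewrite E.
    destruct (step_target (xpt x' i') (nextp (xpt x' i'))) as (m & v & Hv & Ev).
    apply nextp_spec, step_exists; auto. exists m, v. split; auto; lra. }
  intro n. simpl. apply nextp_spec. destruct (Hf n) as (i' & x' & Hx' & E). rewrite E.
  apply step_exists; auto.
Qed.

Lemma traj_shift zs k : trajectory rho d zs -> trajectory rho d (fun n => zs (k + n)%nat).
Proof. intros H n. replace (k + S n)%nat with (S (k + n)) by lia. apply H. Qed.

Lemma traj_cons z zs : trajectory rho d zs -> step rho d z (zs O) ->
  trajectory rho d (fun n => match n with O => z | S m => zs m end).
Proof. intros H Hs [|n]; simpl; auto. Qed.

Lemma traj_back zs zs' t : trajectory rho d zs -> trajectory rho d zs' -> zs t = zs' t -> zs O = zs' O.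
Proof.
  intros H H' E.
  assert (forall k, (k <= t)%nat -> zs (t - k)%nat = zs' (t - k)%nat).
  { induction k; intros Hk. rewrite Nat.sub_0_r; auto.
    apply (step_src_uniq _ _ (zs (t - k)%nat)).
    - pose proof (H (t - S k)%nat). replace (S (t - S k)) with (t - k)%nat in H0 by lia. auto.
    - rewrite IHk by lia. pose proof (H' (t - S k)%nat).
      replace (S (t - S k)) with (t - k)%nat in H0 by lia. auto. }
  specialize (H0 t (le_n t)). rewrite Nat.sub_diag in H0. auto.
Qed.

Definition Rch t z := exists zs, trajectory rho d zs /\ zs O = z /\ zs t = d1pt.

Lemma Rch_uniq t z z' : Rch t z -> Rch t z' -> z = z'.
Proof.
  intros (zs & H & E & F) (zs' & H' & E' & F'). subst. apply (traj_back zs zs' t H H'); congruence.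
Qed.

Lemma Rch_later t t' z : (t' <= t)%nat -> Rch t z -> exists w, Rch t' w.
Proof.
  intros Hle (zs & H & E & F). exists (zs (t - t')%nat). exists (fun n => zs (t - t' + n)%nat).
  split. apply traj_shift; auto. split. f_equal; lia. rewrite <- F. f_equal. lia.
Qed.

Hypothesis Hinf : infinite_set (fun z => preimage rho d z (dpt d i1)).
Hypothesis Hfin2 : finite_set (fun z => preimage rho d z (dpt d i2)).
Hypothesis Hfin3 : finite_set (fun z => preimage rho d z (dpt d i3)).

Lemma Rch_all t : exists z, Rch t z.
Proof.
  apply NNPP. intro Hn. apply Hinf.
  set (w := fun t => epsilon (inhabits d1pt) (Rch t)).
  exists (map w (seq 0 t)). intros z (zs & H & E & t' & Ht' & F).
  assert (Rch t' z) by (exists zs; auto).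
  assert (t' < t)%nat.
  { destruct (Nat.lt_ge_cases t' t); auto. exfalso. apply Hn. eapply Rch_later; eauto. }
  apply in_map_iff. exists t'. split.
  - eapply Rch_uniq; eauto. unfold w. apply epsilon_spec. eauto.
  - apply in_seq. lia.
Qed.

Definition y t := epsilon (inhabits d1pt) (Rch t).
Lemma y_spec t : Rch t (y t).
Proof. unfold y. apply epsilon_spec. apply Rch_all. Qed.

Lemma y0 : y O = d1pt.
Proof. destruct (y_spec O) as (zs & H & E & F). congruence. Qed.

Lemma y_step t : step rho d (y (S t)) (y t).
Proof.
  destruct (y_spec (S t)) as (zs & H & E & F).
  assert (Rch t (zs 1%nat)).
  { exists (fun n => zs (1 + n)%nat). split. apply traj_shift; auto. auto. }
  rewrite <- (Rch_uniq _ _ _ H0 (y_spec t)). rewrite <- E. apply H.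
Qed.

Lemma pre_y z : preimage rho d z d1pt -> exists t, (1 <= t)%nat /\ z = y t.
Proof.
  intros (zs & H & E & t & Ht & F). exists t. split; auto. eapply Rch_uniq. exists zs; eauto. apply y_spec.
Qed.

Lemma y_pre t : (1 <= t)%nat -> preimage rho d (y t) d1pt.
Proof. intros Ht. destruct (y_spec t) as (zs & H & E & F). exists zs. eauto. Qed.

Lemma P1_y z : P1 rho d z -> exists t, z = y t.
Proof.
  intros [E|E]. exists O. rewrite y0. auto. destruct (pre_y z E) as (t & _ & E'). eauto.
Qed.
Lemma y_P1 t : P1 rho d (y t).
Proof. destruct t. left. rewrite y0. reflexivity. right. apply y_pre. lia. Qed.

Lemma fin_inj_false (SS : pt -> Prop) (u : nat -> pt) :
  finite_set SS -> (forall k, SS (u k)) -> (forall a b, u a = u b -> a = b) -> False.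
Proof.
  intros [l Hl] HS Hu.
  assert (NoDup (map u (seq 0 (S (length l))))).
  { apply NoDup_map_NoDup_ForallPairs. intros a b _ _; apply Hu. apply seq_NoDup. }
  assert (incl (map u (seq 0 (S (length l)))) l).
  { intros z Hz. apply in_map_iff in Hz. destruct Hz as (k & <- & _). apply Hl, HS. }
  pose proof (NoDup_incl_length H H0). rewrite length_map, length_seq in H1. lia.
Qed.

Lemma y_succ_eq a b : y a = y b -> y (S a) = y (S b).
Proof. intro E. apply (step_src_uniq _ _ (y a)). apply y_step. rewrite E. apply y_step. Qed.

Lemma y_inj_lt a b : (a < b)%nat -> y a <> y b.
Proof.
  intros Hab E. apply Hinf. exists (map y (seq 0 b)).
  assert (Hk : forall k, y (a + k)%nat = y (b + k)%nat).
  { induction k. rewrite !Nat.add_0_r; auto. rewrite <- !plus_n_Sm. apply y_succ_eq; auto. }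
  assert (Ht : forall t, exists t', (t' < b)%nat /\ y t = y t').
  { intro t. induction t as [t IH] using (well_founded_induction Wf_nat.lt_wf).
    destruct (Nat.lt_ge_cases t b). exists t; auto.
    destruct (IH (a + (t - b))%nat ltac:(lia)) as (t' & Ht' & E'). exists t'. split; auto.
    rewrite <- E'. replace t with (b + (t - b))%nat at 1 by lia. auto. }
  intros z Hz. destruct (pre_y z Hz) as (t & _ & ->). destruct (Ht t) as (t' & Ht' & ->).
  apply in_map_iff. exists t'. split; auto. apply in_seq. lia.
Qed.

Lemma y_inj a b : y a = y b -> a = b.
Proof.
  intros E. destruct (Nat.lt_trichotomy a b) as [h|[h|h]]; auto.
  exfalso; eapply y_inj_lt; eauto. exfalso; eapply y_inj_lt; eauto.
Qed.

Lemma y_pre_y t k : (1 <= k)%nat -> preimage rho d (y (t + k)%nat) (y t).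
Proof.
  intros Hk. destruct (y_spec (t + k)%nat) as (zs & H & E & F).
  exists zs. split; auto. split; auto. exists k. split; auto.
  eapply Rch_uniq; [|apply y_spec]. exists (fun n => zs (k + n)%nat). split. apply traj_shift; auto.
  split; auto. rewrite <- F. f_equal. lia.
Qed.

Lemma y_not_dec t i : i <> i1 -> y t <> dpt d i.
Proof.
  intros Hi E. destruct i; [congruence| |].
  - apply (fin_inj_false _ (fun k => y (t + S k)%nat) Hfin2).
    + intro k. rewrite <- E. apply y_pre_y. lia.
    + intros a b Hab. apply y_inj in Hab. lia.
  - apply (fin_inj_false _ (fun k => y (t + S k)%nat) Hfin3).
    + intro k. rewrite <- E. apply y_pre_y. lia.
    + intros a b Hab. apply y_inj in Hab. lia.
Qed.

Lemma y_not_d1 t : (1 <= t)%nat -> y t <> d1pt.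
Proof. intros Ht E. rewrite <- y0 in E. apply y_inj in E. lia. Qed.

Lemma y_rep t : exists s v, 0 < v < 1 /\ y t = xpt v s.
Proof. apply (step_target (y (S t))). apply y_step. Qed.

Definition sg t := proj1_sig (constructive_indefinite_description _ (y_rep t)).
Definition xs t := proj1_sig (constructive_indefinite_description _
   (proj2_sig (constructive_indefinite_description _ (y_rep t)))).
Lemma xs_spec t : 0 < xs t < 1 /\ y t = xpt (xs t) (sg t).
Proof.
  unfold xs, sg. destruct (constructive_indefinite_description _ (y_rep t)) as [s Hs]. simpl.
  destruct (constructive_indefinite_description _ Hs) as [v Hv]. simpl. auto.
Qed.

Lemma y_branch t : xs (S t) <> d (sg (S t)) /\
  ((xs (S t) < d (sg (S t)) /\ sg t = nxt (sg (S t)) /\ xs t = gL (sg (S t)) (xs (S t))) \/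
   (d (sg (S t)) < xs (S t) /\ sg t = nxt (nxt (sg (S t))) /\ xs t = gR (sg (S t)) (xs (S t)))).
Proof.
  pose proof (y_step t) as H. apply step_iff in H. destruct H as (i & x & Hx & Hz & HH).
  destruct (xs_spec (S t)) as [Hv Ey]. rewrite Ey in Hz.
  destruct (xpt_inj _ _ _ _ Hv Hx Hz) as [<- <-].
  destruct (xs_spec t) as [Hv' Ey'].
  assert (Hne : xs (S t) <> d (sg (S t))).
  { intro E. destruct (sg (S t)) eqn:Es.
    - apply (y_not_d1 (S t)). lia. rewrite Ey, E. reflexivity.
    - apply (y_not_dec (S t) i2). congruence. rewrite Ey, E. reflexivity.
    - apply (y_not_dec (S t) i3). congruence. rewrite Ey, E. reflexivity. }
  split; auto.
  destruct HH as [[H1 H2]|[H1 H2]]; rewrite Ey' in H2.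
  - left. pose proof (gL_int (sg (S t)) (xs (S t)) ltac:(lra)).
    destruct (xpt_inj (xs t) (gL (sg (S t)) (xs (S t))) _ _ Hv' ltac:(lra) H2). split; [lra|auto].
  - right. pose proof (gR_int (sg (S t)) (xs (S t)) ltac:(lra)).
    destruct (xpt_inj (xs t) (gR (sg (S t)) (xs (S t))) _ _ Hv' ltac:(lra) H2). split; [lra|auto].
Qed.

Lemma y0_rep : sg O = i1 /\ xs O = d i1.
Proof.
  destruct (xs_spec O) as [Hv E]. rewrite y0 in E. unfold d1pt, dpt in E.
  pose proof (Hd i1). destruct (xpt_inj (xs O) (d i1) _ _ Hv ltac:(lra) (eq_sym E)); auto.
Qed.

Definition Bad z := z = dpt d i2 \/ z = dpt d i3 \/ preimage rho d z (dpt d i2) \/ preimage rho d z (dpt d i3).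

Lemma pre_back z w u : step rho d z w -> (w = u \/ preimage rho d w u) -> preimage rho d z u.
Proof.
  intros Hs [E|(zs & H & E & t & Ht & F)].
  - subst u. destruct (step_target _ _ Hs) as (m & v & Hv & Ew).
    destruct (ex_traj v m) as (zs & H & E). lra.
    assert (Hz : step rho d z (zs O)) by (rewrite E, <- Ew; auto).
    exists (fun n => match n with O => z | S m => zs m end). split.
    apply traj_cons; auto. split; auto. exists 1%nat. split; auto. simpl. congruence.
  - assert (Hz : step rho d z (zs O)) by (rewrite E; auto).
    exists (fun n => match n with O => z | S m => zs m end). split.
    apply traj_cons; auto. split; auto. exists (S t). split; auto.
Qed.

Lemma Bad_back z w : step rho d z w -> Bad w -> Bad z.
Proof.
  intros Hs HB. right; right. destruct HB as [E|[E|[E|E]]].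
  - left. eapply pre_back; eauto.
  - right. eapply pre_back; eauto.
  - left. eapply pre_back; eauto.
  - right. eapply pre_back; eauto.
Qed.

Lemma Bad_fin : exists lb, forall z, Bad z -> In z lb.
Proof.
  destruct Hfin2 as [l2 H2]. destruct Hfin3 as [l3 H3].
  exists (dpt d i2 :: dpt d i3 :: l2 ++ l3). intros z [E|[E|[E|E]]].
  left; auto. right; left; auto. right; right; apply in_or_app; left; auto.
  right; right; apply in_or_app; right; auto.
Qed.

Lemma ivt_dec (g : R -> R) a b c : a < b -> (forall x, a <= x <= b -> continuity_pt g x) ->
  g b < c < g a -> exists c0, a < c0 < b /\ g c0 = c.
Proof.
  intros Hab Hc Hg.
  destruct (IVT_interv (fun x => c - g x) a b) as (z & Hz & Ez); auto.
  - intros x Hx. apply continuity_pt_minus. apply continuity_pt_const. intros u v; auto. auto.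
  - lra. - lra.
  - exists z. assert (g z = c) by lra. split; auto. split.
    destruct (Req_dec z a); [subst; lra|lra]. destruct (Req_dec z b); [subst; lra|lra].
Qed.

Definition btw a b c := (a < c < b) \/ (b < c < a).

Lemma btw_back (g : R -> R) a b c :
  (forall x, Rmin a b <= x <= Rmax a b -> continuity_pt g x) ->
  (forall x x', Rmin a b <= x -> x < x' -> x' <= Rmax a b -> g x' < g x) ->
  btw (g a) (g b) c -> exists c0, btw a b c0 /\ g c0 = c.
Proof.
  intros Hc Hm [H|H].
  - assert (b < a).
    { destruct (Rtotal_order a b) as [h|[h|h]]; auto.
      pose proof (Hm a b); rewrite Rmin_left, Rmax_right in H0 by lra. specialize (H0 ltac:(lra) h ltac:(lra)). lra.
      subst; lra. }
    rewrite Rmin_right, Rmax_left in * by lra.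
    destruct (ivt_dec g b a c H0 Hc H) as (c0 & Hc0 & E).
    exists c0; split; auto. right; lra.
  - assert (a < b).
    { destruct (Rtotal_order a b) as [h|[h|h]]; auto. subst; lra.
      pose proof (Hm b a); rewrite Rmin_right, Rmax_left in H0 by lra. specialize (H0 ltac:(lra) h ltac:(lra)). lra. }
    rewrite Rmin_left, Rmax_right in * by lra.
    destruct (ivt_dec g a b c H0 Hc H) as (c0 & Hc0 & E).
    exists c0; split; auto. left; lra.
Qed.

Lemma gL_mono i a b : (forall x x', Rmin a b <= x -> x < x' -> x' <= Rmax a b -> gL i x' < gL i x)
  \/ ~ (Rmax a b <= 1).
Proof. destruct (Rle_dec (Rmax a b) 1); [left|right; auto]. intros; apply gL_strict; lra. Qed.

Lemma cut_inv eps p q s : sg p = sg q -> xs p < xs q ->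
  (forall c, xs p <= c <= xs q -> ~ Bad (xpt c (sg p))) -> (s <= p)%nat -> (s <= q)%nat ->
  xs q - xs p < eps ->
  (exists t, (1 <= t)%nat /\ sg t = i1 /\ Rabs (xs t - d i1) < eps) \/
  (sg (p - s)%nat = sg (q - s)%nat /\ Rabs (xs (p - s)%nat - xs (q - s)%nat) <= xs q - xs p /\
   forall c, btw (xs (p - s)%nat) (xs (q - s)%nat) c -> ~ Bad (xpt c (sg (p - s)%nat))).
Proof.
  intros Hsg Hlt HB Hp Hq He. induction s.
  - right. rewrite !Nat.sub_0_r. split; auto. split.
    rewrite Rabs_left1 by lra. lra. intros c [h|h]; apply HB; lra.
  - destruct IHs as [L|(Hs1 & Hs2 & Hs3)]; try lia. left; auto.
    replace (p - s)%nat with (S (p - S s)) in * by lia.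
    replace (q - s)%nat with (S (q - S s)) in * by lia.
    set (P := (p - S s)%nat) in *. set (Q := (q - S s)%nat) in *.
    destruct (xs_spec (S P)) as [HvP _]. destruct (xs_spec (S Q)) as [HvQ _].
    destruct (y_branch P) as [neP [(uP & sP & xP)|(uP & sP & xP)]];
    destruct (y_branch Q) as [neQ [(uQ & sQ & xQ)|(uQ & sQ & xQ)]];
    rewrite <- Hs1 in *; set (tau := sg (S P)) in *.
    +
      right. split. congruence. split.
      { rewrite xP, xQ. eapply Rle_trans. apply gL_lip; lra. auto. }
      intros c Hc HBc. rewrite xP, xQ in Hc.
      destruct (btw_back (gL tau) (xs (S P)) (xs (S Q)) c) as (c0 & Hc0 & Ec0); auto.
      { intros x Hx. apply gL_cont. pose proof (Rmax_lub_lt (xs (S P)) (xs (S Q)) 1 ltac:(lra) ltac:(lra)). lra. }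
      { intros x x' Hx Hxx Hx'. apply gL_strict; auto. pose proof (Rmax_lub_lt (xs (S P)) (xs (S Q)) 1 ltac:(lra) ltac:(lra)). lra. }
      apply (Hs3 c0 Hc0). apply (Bad_back _ (xpt c (sg P))); auto.
      apply step_iff. exists tau, c0. assert (0 < c0 < d tau) by (destruct Hc0; lra).
      split. pose proof (Hd tau); lra. split; auto. left. split. lra. rewrite sP, Ec0; auto.
    +
      assert (Hbt : btw (xs (S P)) (xs (S Q)) (d tau)) by (left; lra).
      destruct tau eqn:Et.
      * left. exists (S P). split. lia. split; auto.
        eapply Rle_lt_trans; [|apply (Rle_lt_trans _ _ _ Hs2 He)].
        rewrite Rabs_left1 by lra. rewrite Rabs_left1 by lra. lra.
      * exfalso. apply (Hs3 (d i2) Hbt). left. reflexivity.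
      * exfalso. apply (Hs3 (d i3) Hbt). right; left. reflexivity.
    +
      assert (Hbt : btw (xs (S P)) (xs (S Q)) (d tau)) by (right; lra).
      destruct tau eqn:Et.
      * left. exists (S P). split. lia. split; auto.
        eapply Rle_lt_trans; [|apply (Rle_lt_trans _ _ _ Hs2 He)].
        rewrite Rabs_pos_eq by lra. rewrite Rabs_pos_eq by lra. lra.
      * exfalso. apply (Hs3 (d i2) Hbt). left. reflexivity.
      * exfalso. apply (Hs3 (d i3) Hbt). right; left. reflexivity.
    +
      right. split. congruence. split.
      { rewrite xP, xQ. eapply Rle_trans. apply gR_lip; lra. auto. }
      intros c Hc HBc. rewrite xP, xQ in Hc.
      destruct (btw_back (gR tau) (xs (S P)) (xs (S Q)) c) as (c0 & Hc0 & Ec0); auto.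
      { intros x Hx. apply gR_cont. pose proof (Rmin_glb_lt (xs (S P)) (xs (S Q)) 0 ltac:(lra) ltac:(lra)). lra. }
      { intros x x' Hx Hxx Hx'. apply gR_strict; auto. pose proof (Rmin_glb_lt (xs (S P)) (xs (S Q)) 0 ltac:(lra) ltac:(lra)). lra. }
      apply (Hs3 c0 Hc0). apply (Bad_back _ (xpt c (sg P))); auto.
      apply step_iff. exists tau, c0. assert (d tau < c0 < 1) by (destruct Hc0; lra).
      split. pose proof (Hd tau); lra. split; auto. right. split. lra. rewrite sP, Ec0; auto.
Qed.

Lemma cut_final eps p q : sg p = sg q -> xs p < xs q ->
  (forall c, xs p <= c <= xs q -> ~ Bad (xpt c (sg p))) -> xs q - xs p < eps ->
  exists t, (1 <= t)%nat /\ sg t = i1 /\ Rabs (xs t - d i1) < eps.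
Proof.
  intros Hsg Hlt HB He. destruct y0_rep as [S0 X0].
  destruct (Nat.le_ge_cases p q) as [h|h].
  - destruct (cut_inv eps p q p Hsg Hlt HB (le_n p) h He) as [L|(E1 & E2 & _)]; auto.
    rewrite Nat.sub_diag in *. assert (p <> q) by (intro; subst; lra).
    exists (q - p)%nat. split. lia. split. congruence. rewrite <- X0, Rabs_minus_sym. lra.
  - destruct (cut_inv eps p q q Hsg Hlt HB h (le_n q) He) as [L|(E1 & E2 & _)]; auto.
    rewrite Nat.sub_diag in *. assert (p <> q) by (intro; subst; lra).
    exists (p - q)%nat. split. lia. split. congruence. rewrite <- X0. lra.
Qed.

Definition cntlt (L : list R) x := length (filter (fun e => if Rlt_dec e x then true else false) L).
Definition cntle (L : list R) x := length (filter (fun e => if Rle_dec e x then true else false) L).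

Lemma cntlt_eq L a b : a <= b -> cntlt L a = cntlt L b -> forall e, In e L -> ~ (a <= e < b).
Proof.
  intros Hab. unfold cntlt.
  assert (Mono : forall L0, (length (filter (fun e => if Rlt_dec e a then true else false) L0) <=
                   length (filter (fun e => if Rlt_dec e b then true else false) L0))%nat).
  { induction L0; simpl; auto. destruct (Rlt_dec a0 a), (Rlt_dec a0 b); simpl; try lia. lra. }
  induction L; simpl; [tauto|]. intros E e [->|He].
  - destruct (Rlt_dec e a), (Rlt_dec e b); simpl in E; try lra.
    specialize (Mono L). lia.
  - destruct (Rlt_dec a0 a), (Rlt_dec a0 b); simpl in E; try lra.
    apply IHL; auto; lia. specialize (Mono L); lia. apply IHL; auto.
Qed.

Lemma cntle_eq L a b : a <= b -> cntle L a = cntle L b -> forall e, In e L -> ~ (a < e <= b).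
Proof.
  intros Hab. unfold cntle.
  assert (Mono : forall L0, (length (filter (fun e => if Rle_dec e a then true else false) L0) <=
                   length (filter (fun e => if Rle_dec e b then true else false) L0))%nat).
  { induction L0; simpl; auto. destruct (Rle_dec a0 a), (Rle_dec a0 b); simpl; try lia. lra. }
  induction L; simpl; [tauto|]. intros E e [->|He].
  - destruct (Rle_dec e a), (Rle_dec e b); simpl in E; try lra.
    specialize (Mono L). lia.
  - destruct (Rle_dec a0 a), (Rle_dec a0 b); simpl in E; try lra.
    apply IHL; auto; lia. specialize (Mono L); lia. apply IHL; auto.
Qed.

Lemma up_mono a b : a <= b -> (up a <= up b)%Z.
Proof.
  intros. destruct (archimed a), (archimed b).
  assert (IZR (up a) < IZR (up b + 1)) by (rewrite plus_IZR; lra).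
  apply lt_IZR in H4. lia.
Qed.

Lemma up_eq a b : up a = up b -> Rabs (a - b) < 1.
Proof.
  intros E. destruct (archimed a), (archimed b). rewrite E in *.
  apply Rabs_def1; lra.
Qed.

Lemma pigeon_nat {K : Type} (k : nat -> K) (allK : list K) :
  (forall t, In (k t) allK) -> exists a b, a <> b /\ k a = k b.
Proof.
  intros Hk. apply NNPP. intro Hn.
  assert (ND : NoDup (map k (seq 0 (S (length allK))))).
  { apply NoDup_map_NoDup_ForallPairs. intros a b _ _ E.
    destruct (Nat.eq_dec a b); auto. exfalso; apply Hn; eauto. apply seq_NoDup. }
  assert (incl (map k (seq 0 (S (length allK)))) allK).
  { intros z Hz. apply in_map_iff in Hz. destruct Hz as (t & <- & _). auto. }
  pose proof (NoDup_incl_length ND H). rewrite length_map, length_seq in H0. lia.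
Qed.

Lemma pair_exists eps : 0 < eps -> exists p q, sg p = sg q /\ xs p < xs q /\
  xs q - xs p < eps /\ (forall c, xs p <= c <= xs q -> ~ Bad (xpt c (sg p))).
Proof.
  intros He. destruct Bad_fin as [lb Hlb].
  set (Lp := fun s => map (fun z : pt => z (nxt (nxt s))) lb).
  assert (HLp : forall c s, Bad (xpt c s) -> In c (Lp s)).
  { intros c s HB. apply in_map_iff. exists (xpt c s). split. apply xpt_c2. auto. }
  set (N := Z.to_nat (up (1 / eps))). set (M := length lb).
  set (k := fun t => (sg t, Z.to_nat (up (xs t / eps)), cntlt (Lp (sg t)) (xs t), cntle (Lp (sg t)) (xs t))).
  set (allK := list_prod (list_prod (list_prod (i1 :: i2 :: i3 :: nil) (seq 0 (S N))) (seq 0 (S M))) (seq 0 (S M))).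
  assert (Hpos : forall t, (0 <= up (xs t / eps))%Z).
  { intro t. destruct (xs_spec t). destruct (archimed (xs t / eps)).
    assert (0 < xs t / eps) by (apply Rdiv_lt_0_compat; lra).
    apply le_IZR. lra. }
  destruct (pigeon_nat k allK) as (a & b & Hab & E).
  { intro t. unfold k, allK. repeat apply in_prod.
    - destruct (sg t); simpl; auto.
    - apply in_seq. split. lia. unfold N. simpl.
      assert (Z.to_nat (up (xs t / eps)) <= Z.to_nat (up (1 / eps)))%nat.
      { apply Z2Nat.inj_le; auto. destruct (archimed (1/eps)).
        assert (0 < 1 / eps) by (apply Rdiv_lt_0_compat; lra). apply le_IZR; lra.
        apply up_mono. destruct (xs_spec t). unfold Rdiv. apply Rmult_le_compat_r.
        left; apply Rinv_0_lt_compat; lra. lra. }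
      lia.
    - apply in_seq. split. lia. unfold cntlt. pose proof (filter_length_le
        (fun e => if Rlt_dec e (xs t) then true else false) (Lp (sg t))).
      unfold Lp in *. rewrite length_map in H. unfold M. lia.
    - apply in_seq. split. lia. unfold cntle. pose proof (filter_length_le
        (fun e => if Rle_dec e (xs t) then true else false) (Lp (sg t))).
      unfold Lp in *. rewrite length_map in H. unfold M. lia. }
  unfold k in E. inversion E as [[Es Eu Ec1 Ec2]].
  assert (Hx : xs a <> xs b).
  { intro Ex. apply Hab, y_inj. destruct (xs_spec a) as [_ ->]. destruct (xs_spec b) as [_ ->].
    rewrite Ex, Es. reflexivity. }
  apply Z2Nat.inj in Eu; auto. apply up_eq in Eu.
  assert (Hd' : Rabs (xs a - xs b) < eps).
  { replace (xs a - xs b) with (eps * (xs a / eps - xs b / eps)) by (field; lra).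
    rewrite Rabs_mult, (Rabs_pos_eq eps) by lra. nra. }
  destruct (Rlt_dec (xs a) (xs b)).
  - exists a, b. split; auto. split; auto. split. rewrite Rabs_left in Hd' by lra. lra.
    intros c Hc HB. apply HLp in HB.
    destruct (Req_dec c (xs b)).
    + apply (cntle_eq (Lp (sg a)) (xs a) (xs b) ltac:(lra) Ec2 c HB). lra.
    + apply (cntlt_eq (Lp (sg a)) (xs a) (xs b) ltac:(lra) Ec1 c HB). lra.
  - exists b, a. split; auto. split. lra. split. rewrite Rabs_pos_eq in Hd' by lra. lra.
    intros c Hc HB. apply HLp in HB. rewrite <- Es in HB.
    destruct (Req_dec c (xs a)).
    + apply (cntle_eq (Lp (sg a)) (xs b) (xs a) ltac:(lra) (eq_sym Ec2) c HB). lra.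
    + apply (cntlt_eq (Lp (sg a)) (xs b) (xs a) ltac:(lra) (eq_sym Ec1) c HB). lra.
Qed.

Lemma core eps : 0 < eps -> exists t, (1 <= t)%nat /\ sg t = i1 /\ Rabs (xs t - d i1) < eps.
Proof.
  intros He. destruct (pair_exists eps He) as (p & q & H1 & H2 & H3 & H4).
  eapply cut_final; eauto.
Qed.

Lemma propag k : forall eps, 0 < eps -> exists t, t <> k /\ sg t = sg k /\ Rabs (xs t - xs k) < eps.
Proof.
  induction k; intros eps He.
  - destruct (core eps He) as (t & Ht & E1 & E2). destruct y0_rep as [S0 X0].
    exists t. split. lia. split. congruence. rewrite X0; auto.
  - destruct (xs_spec (S k)) as [Hu _].
    destruct (y_branch k) as [Hne [(Hl & Es & Ex)|(Hl & Es & Ex)]];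
      set (tau := sg (S k)) in *; set (u := xs (S k)) in *; pose proof (Hd tau).
    + set (e' := Rmin eps (Rmin (d tau - u) u) / 2).
      assert (He' : 0 < e' /\ e' < eps /\ e' < d tau - u /\ e' < u).
      { pose proof (Rmin_glb_lt eps (Rmin (d tau - u) u) 0 He ltac:(apply Rmin_glb_lt; lra)).
        pose proof (Rmin_l eps (Rmin (d tau - u) u)).
        pose proof (Rmin_r eps (Rmin (d tau - u) u)).
        pose proof (Rmin_l (d tau - u) u). pose proof (Rmin_r (d tau - u) u).
        unfold e'. lra. }
      set (a := u - e'). set (b := u + e').
      pose proof (gL_strict tau a u ltac:(unfold a; lra) ltac:(lra)).
      pose proof (gL_strict tau u b ltac:(unfold b; lra) ltac:(unfold b; lra)).
      set (delta := Rmin (gL tau a - gL tau u) (gL tau u - gL tau b)).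
      assert (Hdel : 0 < delta) by (apply Rmin_glb_lt; lra).
      destruct (IHk delta Hdel) as (t & Htk & Est & Ext).
      assert (Hxt : gL tau b < xs t < gL tau a).
      { rewrite Ex in Ext. apply Rabs_def2 in Ext. pose proof (Rmin_l (gL tau a - gL tau u) (gL tau u - gL tau b)).
        pose proof (Rmin_r (gL tau a - gL tau u) (gL tau u - gL tau b)). fold delta in H2, H3. lra. }
      destruct (ivt_dec (gL tau) a b (xs t)) as (c0 & Hc0 & Ec0); auto. unfold a, b; lra.
      { intros x Hx. apply gL_cont. unfold a, b in Hx. lra. }
      assert (Hst : step rho d (xpt c0 tau) (y t)).
      { apply step_iff. exists tau, c0. unfold a, b in Hc0. split. lra. split; auto. left. split. lra.
        destruct (xs_spec t) as [_ ->]. rewrite Ec0, Est, Es. reflexivity. }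
      pose proof (step_src_uniq _ _ _ (y_step t) Hst) as Ey.
      destruct (xs_spec (S t)) as [Hv Ey']. rewrite Ey' in Ey.
      assert (0 <= c0 <= 1) by (unfold a, b in Hc0; lra).
      destruct (xpt_inj _ _ _ _ Hv H2 Ey) as [E1 E2].
      exists (S t). split. lia. split. auto. rewrite E2. apply Rabs_def1; unfold a, b in Hc0; lra.
    + set (e' := Rmin eps (Rmin (u - d tau) (1 - u)) / 2).
      assert (He' : 0 < e' /\ e' < eps /\ e' < u - d tau /\ e' < 1 - u).
      { pose proof (Rmin_glb_lt eps (Rmin (u - d tau) (1 - u)) 0 He ltac:(apply Rmin_glb_lt; lra)).
        pose proof (Rmin_l eps (Rmin (u - d tau) (1 - u))).
        pose proof (Rmin_r eps (Rmin (u - d tau) (1 - u))).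
        pose proof (Rmin_l (u - d tau) (1 - u)). pose proof (Rmin_r (u - d tau) (1 - u)).
        unfold e'. lra. }
      set (a := u - e'). set (b := u + e').
      pose proof (gR_strict tau a u ltac:(unfold a; lra) ltac:(unfold a; lra)).
      pose proof (gR_strict tau u b ltac:(lra) ltac:(unfold b; lra)).
      set (delta := Rmin (gR tau a - gR tau u) (gR tau u - gR tau b)).
      assert (Hdel : 0 < delta) by (apply Rmin_glb_lt; lra).
      destruct (IHk delta Hdel) as (t & Htk & Est & Ext).
      assert (Hxt : gR tau b < xs t < gR tau a).
      { rewrite Ex in Ext. apply Rabs_def2 in Ext. pose proof (Rmin_l (gR tau a - gR tau u) (gR tau u - gR tau b)).
        pose proof (Rmin_r (gR tau a - gR tau u) (gR tau u - gR tau b)). fold delta in H2, H3. lra. }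
      destruct (ivt_dec (gR tau) a b (xs t)) as (c0 & Hc0 & Ec0); auto. unfold a, b; lra.
      { intros x Hx. apply gR_cont. unfold a, b in Hx. lra. }
      assert (Hst : step rho d (xpt c0 tau) (y t)).
      { apply step_iff. exists tau, c0. unfold a, b in Hc0. split. lra. split; auto. right. split. lra.
        destruct (xs_spec t) as [_ ->]. rewrite Ec0, Est, Es. reflexivity. }
      pose proof (step_src_uniq _ _ _ (y_step t) Hst) as Ey.
      destruct (xs_spec (S t)) as [Hv Ey']. rewrite Ey' in Ey.
      assert (0 <= c0 <= 1) by (unfold a, b in Hc0; lra).
      destruct (xpt_inj _ _ _ _ Hv H2 Ey) as [E1 E2].
      exists (S t). split. lia. split. auto. rewrite E2. apply Rabs_def1; unfold a, b in Hc0; lra.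
Qed.

Lemma P1_in_C z : P1 rho d z -> closureA0 (P1 rho d) z.
Proof.
  intros H. destruct (P1_y z H) as [t ->]. split.
  - destruct (xs_spec t) as [Hv ->]. apply xpt_A0. lra.
  - intros eps He. exists (y t). split; auto. rewrite dist3_refl; auto.
Qed.

Lemma C_closed : closedA0 (closureA0 (P1 rho d)).
Proof.
  intros z Hz Had. split; auto. intros eps He.
  destruct (Had (eps/2) ltac:(lra)) as (w & [_ Hw] & Hd1).
  destruct (Hw (eps/2) ltac:(lra)) as (p & Hp & Hd2).
  exists p. split; auto. pose proof (dist3_tri z w p). lra.
Qed.

Lemma C_perf z : closureA0 (P1 rho d) z -> forall eps, 0 < eps ->
  exists p, closureA0 (P1 rho d) p /\ p <> z /\ dist3 z p < eps.
Proof.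
  intros [HA Had] eps He. destruct (classic (P1 rho d z)) as [HP|HnP].
  - destruct (P1_y z HP) as [k ->]. destruct (propag k (eps/2) ltac:(lra)) as (t & Htk & Es & Ex).
    exists (y t). split. apply P1_in_C, y_P1. split.
    intro E. apply Htk, y_inj; auto.
    destruct (xs_spec k) as [_ ->]. destruct (xs_spec t) as [_ ->]. rewrite Es.
    pose proof (dist3_xpt (xs k) (xs t) (sg k)). rewrite Rabs_minus_sym in Ex. lra.
  - destruct (Had eps He) as (p & Hp & Hd1). exists p. split. apply P1_in_C; auto. split; auto.
    intro E; subst; auto.
Qed.

Lemma C_unc : uncountable_set (closureA0 (P1 rho d)).
Proof.
  apply baire. apply C_closed. intros z [H _]; auto. apply C_perf.
  exists (y O). apply P1_in_C, y_P1.
Qed.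

Lemma CD_unc : uncountable_set (fun z => closureA0 (P1 rho d) z /\ ~ P1 rho d z).
Proof.
  intros [g Hg]. apply C_unc.
  exists (fun z => match excluded_middle_informative (exists k, z = y k) with
           | left H => (2 * proj1_sig (constructive_indefinite_description _ H))%nat
           | right _ => (2 * g z + 1)%nat end).
  intros a b Ha Hb.
  destruct (excluded_middle_informative (exists k, a = y k)) as [Ea|Ea];
  destruct (excluded_middle_informative (exists k, b = y k)) as [Eb|Eb].
  - destruct (constructive_indefinite_description _ Ea) as [ka Ka].
    destruct (constructive_indefinite_description _ Eb) as [kb Kb]. simpl. intro E.
    assert (ka = kb) by lia. subst; auto.
  - destruct (constructive_indefinite_description _ Ea). simpl. lia.
  - destruct (constructive_indefinite_description _ Eb). simpl. lia.
  - intro E. assert (g a = g b) by lia. apply Hg; auto.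
    split; auto. intro HP. apply Ea, P1_y; auto.
    split; auto. intro HP. apply Eb, P1_y; auto.
Qed.

Lemma main_res : perfectA0 (closureA0 (P1 rho d)) /\
  uncountable_set (closureA0 (P1 rho d)) /\
  uncountable_set (fun z => closureA0 (P1 rho d) z /\ ~ P1 rho d z).
Proof.
  split. split. apply C_closed. apply C_perf. split. apply C_unc. apply CD_unc.
Qed.

End S.

Theorem corollary5p1 (rho d : idx -> R) :
  (forall i, 0 < rho i < 1) ->
  rho i1 + rho i2 + rho i3 > 1 ->
  rho i1 + rho i2 <= 1 -> rho i2 + rho i3 <= 1 -> rho i1 + rho i3 <= 1 ->
  (forall i, 0 < d i < 1) ->
  infinite_set (fun z => preimage rho d z (dpt d i1)) ->
  finite_set (fun z => preimage rho d z (dpt d i2)) ->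
  finite_set (fun z => preimage rho d z (dpt d i3)) ->
  perfectA0 (closureA0 (P1 rho d)) /\
  uncountable_set (closureA0 (P1 rho d)) /\
  uncountable_set (fun z => closureA0 (P1 rho d) z /\ ~ P1 rho d z).
Proof.
  intros. eapply main_res; eauto.
Qed.
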